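(* Let $(X,d)$ be a proper metric space, let $\sigma$ be a conical bicombing on $X$, and let $x,y\in X$. Then for each integer $n\ge1$ there exist unique points $\sigma_{xy}(n;i)$, $i=0,\dots,n$, such that $\sigma_{xy}(n;0)=x$, $\sigma_{xy}(n;n)=y$, and \[ \sigma_{xy}(n;i)=\sigma\big(\sigma_{xy}(n;i-1),\sigma_{xy}(n;i+1),\tfrac12\big) \] for all $1\le i\le n-1$. Moreover, the map $\sigma^{(n)}\colon X\times X\times[0,1]\to X$ given by \[ \sigma^{(n)}\big(x,y,(1-\lambda)\tfrac{i}{n}+\lambda\tfrac{i+1}{n}\big):=\sigma\big(\sigma_{xy}(n;i),\sigma_{xy}(n;i+1),\lambda\big) \] for all $x,y\in X$, $\lambda\in[0,1]$ and $0\le i\le n-1$, is a conical bicombing.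
   Context: A bicombing on $(X,d)$ is a map $\sigma\colon X\times X\times[0,1]\to X$ such that each $\sigma_{xy}:=\sigma(x,y,\cdot)$ is a geodesic from $x$ to $y$ ($\sigma_{xy}(0)=x$, $\sigma_{xy}(1)=y$, $d(\sigma_{xy}(s),\sigma_{xy}(t))=|s-t|d(x,y)$); it is conical if $d(\sigma_{xy}(t),\sigma_{x'y'}(t))\le(1-t)d(x,x')+t\,d(y,y')$ for all $x,y,x',y'\in X$, $t\in[0,1]$. A metric space is proper if closed bounded sets are compact. *)

(* Defs.v *)
From Stdlib Require Import Reals Lra List.
Open Scope R_scope.

Definition is_metric {X : Type} (d : X -> X -> R) : Prop :=
  (forall x y, 0 <= d x y) /\
  (forall x y, d x y = 0 <-> x = y) /\
  (forall x y, d x y = d y x) /\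
  (forall x y z, d x z <= d x y + d y z).

Definition open_set {X : Type} (d : X -> X -> R) (U : X -> Prop) : Prop :=
  forall x, U x -> exists r, 0 < r /\ forall y, d x y < r -> U y.

Definition closed_set {X : Type} (d : X -> X -> R) (F : X -> Prop) : Prop :=
  open_set d (fun x => ~ F x).

Definition bounded_set {X : Type} (d : X -> X -> R) (A : X -> Prop) : Prop :=
  exists r, forall x y, A x -> A y -> d x y <= r.

Definition compact_set {X : Type} (d : X -> X -> R) (K : X -> Prop) : Prop :=
  forall (I : Type) (U : I -> X -> Prop),
    (forall i, open_set d (U i)) ->
    (forall x, K x -> exists i, U i x) ->
    exists l : list I, forall x, K x -> exists i, In i l /\ U i x.

Definition proper_space {X : Type} (d : X -> X -> R) : Prop :=
  forall F, closed_set d F -> bounded_set d F -> compact_set d F.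

Definition is_geodesic {X : Type} (d : X -> X -> R) (x y : X) (g : R -> X) : Prop :=
  g 0 = x /\ g 1 = y /\
  forall s t, 0 <= s <= 1 -> 0 <= t <= 1 -> d (g s) (g t) = Rabs (s - t) * d x y.

Definition bicombing {X : Type} (d : X -> X -> R) (sigma : X -> X -> R -> X) : Prop :=
  forall x y, is_geodesic d x y (sigma x y).

Definition conical_bicombing {X : Type} (d : X -> X -> R) (sigma : X -> X -> R -> X) : Prop :=
  bicombing d sigma /\
  forall x y x' y' t, 0 <= t <= 1 ->
    d (sigma x y t) (sigma x' y' t) <= (1 - t) * d x x' + t * d y y'.

Definition subdivision_points {X : Type} (sigma : X -> X -> R -> X) (n : nat)
    (x y : X) (p : nat -> X) : Prop :=
  p O = x /\ p n = y /\
  forall i : nat, (1 <= i)%nat -> (i <= n - 1)%nat ->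
    p i = sigma (p (i - 1)%nat) (p (i + 1)%nat) (1 / 2).

Definition is_sigma_n {X : Type} (sigma : X -> X -> R -> X) (n : nat)
    (P : X -> X -> nat -> X) (s : X -> X -> R -> X) : Prop :=
  forall x y (lam : R) (i : nat), 0 <= lam <= 1 -> (i < n)%nat ->
    s x y ((1 - lam) * (INR i / INR n) + lam * (INR (i + 1) / INR n))
      = sigma (P x y i) (P x y (i + 1)%nat) lam.

(* Main.v *)
Require Import Defs.
From Stdlib Require Import Reals Lra Lia Arith List Classical ClassicalEpsilon.
Open Scope R_scope.

Lemma d0 {X} (d : X -> X -> R) : is_metric d -> forall a b, d a b = 0 -> a = b.
Proof. intros [_ [H _]] a b E. apply H; auto. Qed.
Lemma dnn {X} (d : X -> X -> R) : is_metric d -> forall a b, 0 <= d a b.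
Proof. intros [H _] a b. apply H. Qed.
Lemma dxx {X} (d : X -> X -> R) : is_metric d -> forall a, d a a = 0.
Proof. intros [_ [H _]] a. apply H; auto. Qed.
Lemma dsym {X} (d : X -> X -> R) : is_metric d -> forall a b, d a b = d b a.
Proof. intros [_ [_ [H _]]] a b. apply H. Qed.
Lemma dtri {X} (d : X -> X -> R) : is_metric d -> forall a b c, d a c <= d a b + d b c.
Proof. intros [_ [_ [_ H]]] a b c. apply H. Qed.

Lemma dsmall {X} (d : X -> X -> R) : is_metric d -> forall a b,
  (forall e, 0 < e -> d a b < e) -> a = b.
Proof.
  intros Hm a b H. apply (d0 d Hm). pose proof (dnn d Hm a b).
  destruct (Req_dec (d a b) 0) as [E|E]; auto.
  specialize (H (d a b) ltac:(lra)). lra.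
Qed.

Lemma sig0 {X} d (sigma : X -> X -> R -> X) : conical_bicombing d sigma -> forall a b, sigma a b 0 = a.
Proof. intros [H _] a b. apply (H a b). Qed.
Lemma sig1 {X} d (sigma : X -> X -> R -> X) : conical_bicombing d sigma -> forall a b, sigma a b 1 = b.
Proof. intros [H _] a b. apply (H a b). Qed.
Lemma sigd {X} d (sigma : X -> X -> R -> X) : conical_bicombing d sigma -> forall a b s t,
  0 <= s <= 1 -> 0 <= t <= 1 -> d (sigma a b s) (sigma a b t) = Rabs (s - t) * d a b.
Proof. intros [H _] a b. apply (H a b). Qed.
Lemma sigc {X} d (sigma : X -> X -> R -> X) : conical_bicombing d sigma -> forall x y x' y' t, 0 <= t <= 1 ->
    d (sigma x y t) (sigma x' y' t) <= (1 - t) * d x x' + t * d y y'.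
Proof. intros [_ H]. apply H. Qed.
Lemma sigxx {X} d (sigma : X -> X -> R -> X) : is_metric d -> conical_bicombing d sigma -> forall a t,
  0 <= t <= 1 -> sigma a a t = a.
Proof.
  intros Hm Hs a t Ht. apply (d0 d Hm).
  pose proof (sigd d sigma Hs a a t 0 Ht ltac:(lra)) as E.
  rewrite (sig0 d sigma Hs) in E. rewrite E, (dxx d Hm). ring.
Qed.

Lemma fin_bound (f : nat -> R) (n : nat) : exists M, 0 <= M /\ forall i, (i <= n)%nat -> f i <= M.
Proof.
  induction n as [|n [M [HM H]]].
  - exists (Rabs (f 0%nat)). split; [apply Rabs_pos|]. intros i Hi.
    replace i with 0%nat by lia. apply Rle_abs.
  - exists (Rmax M (Rabs (f (S n)))). split.
    + eapply Rle_trans; [exact HM| apply Rmax_l].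
    + intros i Hi. destruct (Nat.eq_dec i (S n)) as [->|Ne].
      * eapply Rle_trans; [apply Rle_abs| apply Rmax_r].
      * eapply Rle_trans; [apply H; lia| apply Rmax_l].
Qed.

Definition wt (n i : nat) : R := INR i * (INR n - INR i).

Lemma wt_rec n i : (1 <= i)%nat -> wt n (i - 1) + wt n (i + 1) = 2 * wt n i - 2.
Proof. intros Hi. unfold wt. rewrite minus_INR by lia. rewrite plus_INR. simpl. ring. Qed.

Lemma wt_nonneg n i : (i <= n)%nat -> 0 <= wt n i.
Proof. intros. unfold wt. apply le_INR in H. pose proof (pos_INR i). nra. Qed.

Lemma wt_ge1 n i : (1 <= i)%nat -> (i <= n - 1)%nat -> 1 <= wt n i.
Proof. intros. unfold wt. assert (1 <= INR i) by (apply (le_INR 1); lia).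
  assert (INR i + 1 <= INR n) by (rewrite <- S_INR; apply le_INR; lia). nra. Qed.

Lemma wt_le n i : (i <= n)%nat -> wt n i <= INR n * INR n.
Proof. intros. unfold wt. apply le_INR in H. pose proof (pos_INR i). nra. Qed.

Lemma decay (v C th : R) : 0 <= th < 1 -> 0 <= C -> (forall k, v <= C * th ^ k) -> v <= 0.
Proof.
  intros Hth HC H. destruct (Rle_dec v 0) as [|Hv]; auto. exfalso.
  assert (Hy : 0 < v / (C + 1)). { apply Rdiv_lt_0_compat; lra. }
  destruct (pow_lt_1_zero th ltac:(rewrite Rabs_pos_eq; lra) _ Hy) as [N HN].
  specialize (HN N (le_n _)). specialize (H N).
  rewrite Rabs_pos_eq in HN by (apply pow_le; lra).
  assert (C * th ^ N <= C * (v / (C+1))) by (apply Rmult_le_compat_l; lra).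
  assert (C * (v / (C+1)) < v). { apply (Rmult_lt_reg_r (C+1)); [lra|].
    field_simplify; lra. }
  lra.
Qed.

Lemma maxprinc (n : nat) (f : nat -> R) : (1 <= n)%nat ->
  f 0%nat <= 0 -> f n <= 0 ->
  (forall i, (1 <= i)%nat -> (i <= n - 1)%nat -> 2 * f i <= f (i - 1)%nat + f (i + 1)%nat) ->
  forall i, (i <= n)%nat -> f i <= 0.
Proof.
  intros Hn H0 Hn0 Hsub.
  destruct (fin_bound f n) as [M [HM HMb]].
  set (W := INR n * INR n).
  assert (HW : 1 <= W). { assert (1 <= INR n) by (apply (le_INR 1); lia). unfold W; nra. }
  set (th := 1 - 1 / W).
  assert (Hth : 0 <= th < 1). { unfold th. split.
    - assert (1 / W <= 1). { apply (Rmult_le_reg_r W); [lra|]. field_simplify; lra. } lra.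
    - assert (0 < 1 / W) by (apply Rdiv_lt_0_compat; lra). lra. }
  assert (Hk : forall k i, (i <= n)%nat -> f i <= M * th ^ k * wt n i).
  { induction k as [|k IH]; intros i Hi.
    - simpl. destruct (Nat.eq_dec i 0) as [->|Ni].
      + unfold wt. simpl. lra.
      + destruct (Nat.eq_dec i n) as [->|Nn].
        * unfold wt. replace (INR n - INR n) with 0 by ring. lra.
        * pose proof (wt_ge1 n i ltac:(lia) ltac:(lia)). specialize (HMb i Hi). nra.
    - destruct (Nat.eq_dec i 0) as [->|Ni].
      + unfold wt. simpl. replace (0 * (INR n - 0)) with 0 by ring. lra.
      + destruct (Nat.eq_dec i n) as [->|Nn].
        * unfold wt. replace (INR n - INR n) with 0 by ring. lra.
        * pose proof (Hsub i ltac:(lia) ltac:(lia)).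
          pose proof (IH (i-1)%nat ltac:(lia)). pose proof (IH (i+1)%nat ltac:(lia)).
          pose proof (wt_rec n i ltac:(lia)) as Hrec. pose proof (wt_le n i Hi).
          pose proof (wt_nonneg n i Hi).
          assert (Hp : 0 <= M * th ^ k) by (apply Rmult_le_pos; [lra| apply pow_le; lra]).
          assert (th * wt n i >= wt n i - 1). { unfold th.
            assert (wt n i / W <= 1). { apply Rmult_le_reg_r with W; [lra|]. unfold Rdiv; rewrite Rmult_assoc, Rinv_l by lra. unfold W; lra. }
            replace ((1 - 1 / W) * wt n i) with (wt n i - wt n i / W) by (field; lra). lra. }
          simpl. replace (M * (th * th ^ k) * wt n i) with ((M * th ^ k) * (th * wt n i)) by ring.
          assert (f i <= M * th ^ k * (wt n i - 1)).
          { replace (M * th ^ k * (wt n i - 1)) with (M * th^k * (wt n (i-1) + wt n (i+1)) / 2)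
              by (rewrite Hrec; field). lra. }
          assert (M * th ^ k * (wt n i - 1) <= M * th ^ k * (th * wt n i)) by
            (apply Rmult_le_compat_l; lra). lra. }
  intros i Hi. apply (decay (f i) (M * W) th Hth ltac:(unfold W; apply Rmult_le_pos; [lra|apply Rmult_le_pos; apply pos_INR])).
  intros k. eapply Rle_trans; [apply (Hk k i Hi)|].
  replace (M * W * th ^ k) with ((M * th ^ k) * W) by ring.
  apply Rmult_le_compat_l; [apply Rmult_le_pos; [lra| apply pow_le; lra]| apply wt_le; auto].
Qed.

Lemma sig_l {X} d (sigma : X -> X -> R -> X) : conical_bicombing d sigma -> forall a b t,
  0 <= t <= 1 -> d a (sigma a b t) = t * d a b.
Proof. intros Hs a b t Ht. pose proof (sigd d sigma Hs a b 0 t ltac:(lra) Ht) as E.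
  rewrite (sig0 d sigma Hs) in E. rewrite E. rewrite Rabs_left1 by lra. ring. Qed.
Lemma sig_r {X} d (sigma : X -> X -> R -> X) : conical_bicombing d sigma -> forall a b t,
  0 <= t <= 1 -> d (sigma a b t) b = (1 - t) * d a b.
Proof. intros Hs a b t Ht. pose proof (sigd d sigma Hs a b t 1 Ht ltac:(lra)) as E.
  rewrite (sig1 d sigma Hs) in E. rewrite E. rewrite Rabs_left1 by lra. ring. Qed.

Lemma compare {X} (d : X -> X -> R) sigma (Hm : is_metric d) (Hs : conical_bicombing d sigma)
  n (Hn : (1 <= n)%nat) x y x' y' p q :
  subdivision_points sigma n x y p -> subdivision_points sigma n x' y' q ->
  forall i, (i <= n)%nat ->
  d (p i) (q i) <= (1 - INR i / INR n) * d x x' + (INR i / INR n) * d y y'.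
Proof.
  intros [Hp0 [Hpn Hpm]] [Hq0 [Hqn Hqm]].
  assert (HnR : 1 <= INR n) by (apply (le_INR 1); lia).
  set (L := fun i => (1 - INR i / INR n) * d x x' + (INR i / INR n) * d y y').
  intros i Hi.
  enough (d (p i) (q i) - L i <= 0) by (unfold L in *; lra).
  apply (maxprinc n (fun i => d (p i) (q i) - L i) Hn); auto.
  - unfold L. rewrite Hp0, Hq0. simpl. unfold Rdiv. lra.
  - unfold L. rewrite Hpn, Hqn. field_simplify; lra.
  - intros j H1 H2. rewrite (Hpm j H1 H2), (Hqm j H1 H2).
    pose proof (sigc d sigma Hs (p (j-1)%nat) (p (j+1)%nat) (q (j-1)%nat) (q (j+1)%nat) (1/2) ltac:(lra)).
    assert (L (j-1)%nat + L (j+1)%nat = 2 * L j).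
    { unfold L. rewrite minus_INR by lia. rewrite plus_INR. simpl. field. lra. }
    rewrite <- (Hpm j H1 H2), <- (Hqm j H1 H2) in *. lra.
Qed.

Lemma const_sub {X} (d : X -> X -> R) sigma (Hm : is_metric d) (Hs : conical_bicombing d sigma) n x :
  subdivision_points sigma n x x (fun _ => x).
Proof. split; [reflexivity|split; [reflexivity|]]. intros. symmetry. apply (sigxx d sigma Hm Hs); lra. Qed.

Lemma delta_eq {X} (d : X -> X -> R) sigma (Hm : is_metric d) (Hs : conical_bicombing d sigma)
  n (Hn : (1 <= n)%nat) x y p :
  subdivision_points sigma n x y p ->
  forall i, (i < n)%nat -> d (p i) (p (i+1)%nat) = d x y / INR n.
Proof.
  intros Hp.
  assert (HnR : 1 <= INR n) by (apply (le_INR 1); lia).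
  destruct Hp as [Hp0 [Hpn Hpm]] eqn:E.
  assert (Hc : forall i, (i < n)%nat -> d (p i) (p (i+1)%nat) = d (p 0%nat) (p 1%nat)).
  { induction i as [|i IH]; intros Hi; [reflexivity|].
    rewrite <- IH by lia.
    pose proof (Hpm (S i) ltac:(lia) ltac:(lia)) as Hm'.
    replace (S i - 1)%nat with i in Hm' by lia. replace (S i + 1)%nat with (i + 2)%nat in Hm' by lia.
    replace (S i) with (i+1)%nat in * by lia. rewrite Hm'.
    replace (i + 1 + 1)%nat with (i+2)%nat by lia. rewrite (sig_l d sigma Hs) by lra. rewrite (sig_r d sigma Hs) by lra. lra. }
  assert (Hup : d (p 0%nat) (p 1%nat) <= d x y / INR n).
  { pose proof (compare d sigma Hm Hs n Hn x y x x p (fun _ => x) Hp (const_sub d sigma Hm Hs n x) 1%nat Hn) as C.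
    rewrite (dxx d Hm) in C. rewrite Hp0. rewrite (dsym d Hm). simpl in C. rewrite (dsym d Hm y x) in C. lra. }
  assert (Hch : forall k, (k <= n)%nat -> d (p 0%nat) (p k) <= INR k * d (p 0%nat) (p 1%nat)).
  { induction k as [|k IH]; intros Hk.
    - rewrite (dxx d Hm). simpl. lra.
    - eapply Rle_trans; [apply (dtri d Hm _ (p k))|].
      replace (p (S k)) with (p (k+1)%nat) by (f_equal; lia). rewrite (Hc k) by lia.
      rewrite S_INR. specialize (IH ltac:(lia)). lra. }
  specialize (Hch n (le_n _)). rewrite Hp0, Hpn in Hch. rewrite Hp0 in Hup.
  intros i Hi. rewrite Hc by auto. rewrite Hp0.
  apply Rle_antisym; auto.
  apply (Rmult_le_reg_l (INR n)); [lra|]. field_simplify; lra.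
Qed.

Lemma chain {X} (d : X -> X -> R) sigma (Hm : is_metric d) (Hs : conical_bicombing d sigma)
  n (Hn : (1 <= n)%nat) x y p :
  subdivision_points sigma n x y p ->
  forall k i, (i + k <= n)%nat -> d (p i) (p (i+k)%nat) <= INR k * (d x y / INR n).
Proof.
  intros Hp. induction k as [|k IH]; intros i Hik.
  - rewrite Nat.add_0_r, (dxx d Hm). simpl. lra.
  - eapply Rle_trans; [apply (dtri d Hm _ (p (i+k)%nat))|].
    replace (i + S k)%nat with (i+k+1)%nat by lia.
    rewrite (delta_eq d sigma Hm Hs n Hn x y p Hp) by lia. rewrite S_INR.
    specialize (IH i ltac:(lia)). lra.
Qed.

Lemma G1 {X} (d : X -> X -> R) sigma (Hm : is_metric d) (Hs : conical_bicombing d sigma)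
  n (Hn : (1 <= n)%nat) x y p :
  subdivision_points sigma n x y p ->
  forall i lam, (i < n)%nat -> 0 <= lam <= 1 ->
  d x (sigma (p i) (p (i+1)%nat) lam) = (INR i + lam) * (d x y / INR n).
Proof.
  intros Hp i lam Hi Hl.
  assert (HnR : 1 <= INR n) by (apply (le_INR 1); lia).
  pose proof (delta_eq d sigma Hm Hs n Hn x y p Hp i Hi) as Hd.
  pose proof (chain d sigma Hm Hs n Hn x y p Hp) as Hc.
  destruct Hp as [Hp0 [Hpn _]].
  set (u := sigma (p i) (p (i+1)%nat) lam).
  assert (Hl1 : d (p i) u = lam * (d x y / INR n)) by (unfold u; rewrite (sig_l d sigma Hs) by lra; rewrite Hd; ring).
  assert (Hr1 : d u (p (i+1)%nat) = (1 - lam) * (d x y / INR n)) by (unfold u; rewrite (sig_r d sigma Hs) by lra; rewrite Hd; ring).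
  apply Rle_antisym.
  - eapply Rle_trans; [apply (dtri d Hm _ (p i))|].
    pose proof (Hc i 0%nat ltac:(lia)) as C. simpl in C. rewrite Hp0 in C. lra.
  - pose proof (dtri d Hm x u y) as T1.
    pose proof (dtri d Hm u (p (i+1)%nat) y) as T2.
    pose proof (Hc (n - (i+1))%nat (i+1)%nat ltac:(lia)) as C.
    replace (i + 1 + (n - (i + 1)))%nat with n in C by lia. rewrite Hpn in C.
    rewrite minus_INR, plus_INR in C by lia. simpl in C.
    assert (d x y = INR n * (d x y / INR n)) by (field; lra).
    lra.
Qed.

Lemma G2 {X} (d : X -> X -> R) sigma (Hm : is_metric d) (Hs : conical_bicombing d sigma)
  n (Hn : (1 <= n)%nat) x y p :
  subdivision_points sigma n x y p ->
  forall i lam j mu, (i < n)%nat -> 0 <= lam <= 1 -> (j < n)%nat -> 0 <= mu <= 1 ->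
  INR i + lam <= INR j + mu ->
  d (sigma (p i) (p (i+1)%nat) lam) (sigma (p j) (p (j+1)%nat) mu)
   = (INR j + mu - (INR i + lam)) * (d x y / INR n).
Proof.
  intros Hp i lam j mu Hi Hl Hj Hmu Hle.
  assert (HnR : 1 <= INR n) by (apply (le_INR 1); lia).
  pose proof (G1 d sigma Hm Hs n Hn x y p Hp) as HG.
  pose proof (delta_eq d sigma Hm Hs n Hn x y p Hp) as Hd.
  pose proof (chain d sigma Hm Hs n Hn x y p Hp) as Hc.
  set (u := sigma (p i) (p (i+1)%nat) lam).
  set (v := sigma (p j) (p (j+1)%nat) mu).
  apply Rle_antisym.
  - destruct (lt_eq_lt_dec i j) as [[Hij|<-]|Hij].
    + eapply Rle_trans; [apply (dtri d Hm _ (p (i+1)%nat))|].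
      eapply Rle_trans; [apply Rplus_le_compat_l, (dtri d Hm _ (p j))|].
      pose proof (Hc (j - (i+1))%nat (i+1)%nat ltac:(lia)) as C.
      replace (i + 1 + (j - (i + 1)))%nat with j in C by lia.
      rewrite minus_INR, plus_INR in C by lia. simpl in C.
      unfold u, v. rewrite (sig_r d sigma Hs) by lra. rewrite (sig_l d sigma Hs) by lra.
      rewrite !Hd by lia. lra.
    + unfold u, v. rewrite (sigd d sigma Hs) by lra. rewrite Hd by lia.
      rewrite Rabs_left1 by lra. lra.
    + assert (INR j + 1 <= INR i) by (rewrite <- S_INR; apply le_INR; lia).
      assert (lam = 0) by lra. assert (mu = 1) by lra. subst lam mu.
      assert (i = S j). { destruct (Nat.eq_dec i (S j)); auto.
        assert (INR j + 2 <= INR i) by (replace 2 with (INR 2) by (simpl; ring); rewrite <- plus_INR; apply le_INR; lia). lra. }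
      subst i. unfold u, v. rewrite (sig0 d sigma Hs), (sig1 d sigma Hs).
      replace (j+1)%nat with (S j) by lia. rewrite (dxx d Hm). rewrite S_INR. lra.
  - pose proof (dtri d Hm x u v). unfold u, v in *.
    rewrite !HG in * by auto. lra.
Qed.

Lemma expr_eq n i lam : (1 <= n)%nat ->
  (1-lam)*(INR i/INR n) + lam*(INR (i+1)/INR n) = (INR i + lam) / INR n.
Proof. intros Hn. assert (1 <= INR n) by (apply (le_INR 1); lia).
  rewrite plus_INR. simpl. field. lra. Qed.

Lemma decomp_aux n t : (1 <= n)%nat -> forall m, (1 <= m <= n)%nat -> 0 <= t <= INR m / INR n ->
  exists i, (i < m)%nat /\ INR i / INR n <= t <= INR (i+1) / INR n.
Proof.
  intros Hn. assert (HnR : 1 <= INR n) by (apply (le_INR 1); lia).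
  induction m as [|m IH]; intros Hm Ht; [lia|].
  destruct (Nat.eq_dec m 0) as [->|Hm0].
  - exists 0%nat. split; [lia|]. simpl. unfold Rdiv. rewrite Rmult_0_l. simpl in Ht. lra.
  - destruct (Rle_dec t (INR m / INR n)) as [Hle|Hgt].
    + destruct (IH ltac:(lia) ltac:(lra)) as [i [Hi Hit]]. exists i. split; [lia|auto].
    + exists m. split; [lia|]. replace (m+1)%nat with (S m) by lia. lra.
Qed.

Lemma decomp n t : (1 <= n)%nat -> 0 <= t <= 1 ->
  exists i lam, (i < n)%nat /\ 0 <= lam <= 1 /\
    t = (1-lam)*(INR i/INR n) + lam*(INR (i+1)/INR n).
Proof.
  intros Hn Ht. assert (HnR : 1 <= INR n) by (apply (le_INR 1); lia).
  destruct (decomp_aux n t Hn n ltac:(lia)) as [i [Hi [H1 H2]]].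
  { unfold Rdiv. rewrite Rinv_r by lra. lra. }
  exists i, (t * INR n - INR i). split; [auto|split].
  - rewrite plus_INR in H2. simpl in H2.
    apply (Rmult_le_compat_r (INR n)) in H1; [|lra].
    apply (Rmult_le_compat_r (INR n)) in H2; [|lra].
    unfold Rdiv in *. rewrite Rmult_assoc, Rinv_l in H1, H2 by lra. lra.
  - rewrite expr_eq by auto. field. lra.
Qed.

Lemma consist i lam i' lam' : 0 <= lam <= 1 -> 0 <= lam' <= 1 ->
  INR i + lam = INR i' + lam' ->
  (i = i' /\ lam = lam') \/ (i' = S i /\ lam = 1 /\ lam' = 0) \/ (i = S i' /\ lam' = 1 /\ lam = 0).
Proof.
  intros H1 H2 E. destruct (lt_eq_lt_dec i i') as [[H|<-]|H].
  - right; left. assert (INR i + 1 <= INR i') by (rewrite <- S_INR; apply le_INR; lia).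
    destruct (Nat.eq_dec i' (S i)) as [->|Ne]; [split; [auto|lra]|].
    assert (INR i + 2 <= INR i') by (replace 2 with (INR 2) by (simpl; ring); rewrite <- plus_INR; apply le_INR; lia). lra.
  - left. split; auto. lra.
  - right; right. assert (INR i' + 1 <= INR i) by (rewrite <- S_INR; apply le_INR; lia).
    destruct (Nat.eq_dec i (S i')) as [->|Ne]; [split; [auto|lra]|].
    assert (INR i' + 2 <= INR i) by (replace 2 with (INR 2) by (simpl; ring); rewrite <- plus_INR; apply le_INR; lia). lra.
Qed.

Lemma sigma_n_exists {X} (d : X -> X -> R) sigma (Hm : is_metric d) (Hs : conical_bicombing d sigma)
  n (Hn : (1 <= n)%nat) (P : X -> X -> nat -> X) : exists s, is_sigma_n sigma n P s.
Proof.
  assert (HnR : 1 <= INR n) by (apply (le_INR 1); lia).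
  assert (Hc : forall t, exists il : nat * R, 0 <= t <= 1 -> ((fst il < n)%nat /\ 0 <= snd il <= 1 /\
     t = (1 - snd il)*(INR (fst il)/INR n) + snd il*(INR (fst il+1)/INR n))).
  { intros t. destruct (Rle_dec 0 t) as [H0|H0]; [destruct (Rle_dec t 1) as [H1|H1]|].
    - destruct (decomp n t Hn ltac:(lra)) as [i [lam H]]. exists (i, lam). intros _. exact H.
    - exists (0%nat, 0). intros; lra.
    - exists (0%nat, 0). intros; lra. }
  set (c := fun t => proj1_sig (constructive_indefinite_description _ (Hc t))).
  assert (Hcs : forall t, 0 <= t <= 1 -> ((fst (c t) < n)%nat /\ 0 <= snd (c t) <= 1 /\
     t = (1 - snd (c t))*(INR (fst (c t))/INR n) + snd (c t)*(INR (fst (c t)+1)/INR n))).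
  { intros t. unfold c. destruct (constructive_indefinite_description _ (Hc t)) as [il Hil]. exact Hil. }
  exists (fun x y t => sigma (P x y (fst (c t))) (P x y (fst (c t) + 1)%nat) (snd (c t))).
  intros x y lam i Hl Hi.
  set (t := (1 - lam) * (INR i / INR n) + lam * (INR (i + 1) / INR n)).
  assert (Ht : 0 <= t <= 1).
  { unfold t. rewrite expr_eq by auto. assert (INR i + 1 <= INR n) by (rewrite <- S_INR; apply le_INR; lia).
    pose proof (pos_INR i). split.
    - unfold Rdiv. apply Rmult_le_pos; [lra| left; apply Rinv_0_lt_compat; lra].
    - apply (Rmult_le_reg_r (INR n)); [lra|]. unfold Rdiv. rewrite Rmult_assoc, Rinv_l by lra. lra. }
  destruct (Hcs t Ht) as [Hi' [Hl' Et]].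
  destruct (c t) as [i' lam']. simpl in *.
  assert (E : INR i + lam = INR i' + lam').
  { unfold t in Et. rewrite !expr_eq in Et by auto.
    apply (Rmult_eq_compat_r (INR n)) in Et. unfold Rdiv in Et. rewrite !Rmult_assoc, !Rinv_l in Et by lra. lra. }
  destruct (consist i lam i' lam' Hl Hl' E) as [[-> ->]|[[-> [-> ->]]|[-> [-> ->]]]].
  - reflexivity.
  - rewrite (sig0 d sigma Hs), (sig1 d sigma Hs). f_equal. lia.
  - rewrite (sig0 d sigma Hs), (sig1 d sigma Hs). f_equal. lia.
Qed.

Lemma sigma_n_conical {X} (d : X -> X -> R) sigma (Hm : is_metric d) (Hs : conical_bicombing d sigma)
  n (Hn : (1 <= n)%nat) (P : X -> X -> nat -> X) :
  (forall x y, subdivision_points sigma n x y (P x y)) ->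
  forall s, is_sigma_n sigma n P s -> conical_bicombing d s.
Proof.
  intros HP s Hsn.
  assert (HnR : 1 <= INR n) by (apply (le_INR 1); lia).
  assert (Ev : forall t, 0 <= t <= 1 -> exists i lam, (i < n)%nat /\ 0 <= lam <= 1 /\
    t = (1-lam)*(INR i/INR n) + lam*(INR (i+1)/INR n) /\
    forall x y, s x y t = sigma (P x y i) (P x y (i+1)%nat) lam).
  { intros t Ht. destruct (decomp n t Hn Ht) as [i [lam [Hi [Hl Et]]]].
    exists i, lam. repeat split; auto; try lra. intros x y. rewrite Et. apply Hsn; auto. }
  split.
  - intros x y. destruct (HP x y) as [Hp0 [Hpn Hpm]]. split; [|split].
    + pose proof (Hsn x y 0 0%nat ltac:(lra) ltac:(lia)) as H.
      assert (E : (1 - 0) * (INR 0 / INR n) + 0 * (INR (0 + 1) / INR n) = 0) by (simpl; field; lra).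
      rewrite E in H. rewrite H, (sig0 d sigma Hs). auto.
    + pose proof (Hsn x y 1 (n-1)%nat ltac:(lra) ltac:(lia)) as H.
      assert (E : (1 - 1) * (INR (n-1) / INR n) + 1 * (INR (n - 1 + 1) / INR n) = 1).
      { replace (n - 1 + 1)%nat with n by lia. field. lra. }
      rewrite E in H. rewrite H, (sig1 d sigma Hs). replace (n - 1 + 1)%nat with n by lia. auto.
    + intros a b Ha Hb.
      destruct (Ev a Ha) as [i [lam [Hi [Hl [Ea Sa]]]]].
      destruct (Ev b Hb) as [j [mu [Hj [Hmu [Eb Sb]]]]].
      rewrite Sa, Sb. rewrite expr_eq in Ea, Eb by auto.
      subst a b.
      replace ((INR i + lam) / INR n - (INR j + mu) / INR n) with (((INR i + lam) - (INR j + mu)) / INR n) by (field; lra).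
      unfold Rdiv. rewrite Rabs_mult, (Rabs_pos_eq (/ INR n)) by (left; apply Rinv_0_lt_compat; lra).
      destruct (Rle_dec (INR i + lam) (INR j + mu)) as [Hle|Hgt].
      * rewrite (G2 d sigma Hm Hs n Hn x y (P x y) (HP x y)) by auto.
        rewrite Rabs_left1 by lra. unfold Rdiv. ring.
      * rewrite (dsym d Hm). rewrite (G2 d sigma Hm Hs n Hn x y (P x y) (HP x y)) by (auto; lra).
        rewrite Rabs_pos_eq by lra. unfold Rdiv. ring.
  - intros x y x' y' t Ht.
    destruct (Ev t Ht) as [i [lam [Hi [Hl [Et St]]]]].
    rewrite !St.
    eapply Rle_trans; [apply (sigc d sigma Hs); auto|].
    pose proof (compare d sigma Hm Hs n Hn x y x' y' (P x y) (P x' y') (HP x y) (HP x' y') i ltac:(lia)) as C1.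
    pose proof (compare d sigma Hm Hs n Hn x y x' y' (P x y) (P x' y') (HP x y) (HP x' y') (i+1)%nat ltac:(lia)) as C2.
    set (r := INR i / INR n) in *. set (r1 := INR (i+1) / INR n) in *.
    apply (Rmult_le_compat_l (1 - lam)) in C1; [|lra].
    apply (Rmult_le_compat_l lam) in C2; [|lra].
    assert (E : (1 - t) * d x x' + t * d y y' =
      (1 - lam) * ((1 - r) * d x x' + r * d y y') + lam * ((1 - r1) * d x x' + r1 * d y y')) by (rewrite Et; ring).
    rewrite E. lra.
Qed.

Lemma list_N {X} (d : X -> X -> R) (u : nat -> X)
  (I : Type) (z : I -> X) (r : I -> R) (HN : forall i, exists N, forall k, (k >= N)%nat -> 2 * r i <= d (z i) (u k)) :
  forall l : list I, exists N, forall i, In i l -> forall k, (k >= N)%nat -> 2 * r i <= d (z i) (u k).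
Proof.
  induction l as [|a l [N IH]].
  - exists 0%nat. intros i [].
  - destruct (HN a) as [Na Ha]. exists (Nat.max N Na). intros i [<-|Hi] k Hk.
    + apply Ha. lia.
    + apply IH; auto. lia.
Qed.

Lemma complete {X} (d : X -> X -> R) (Hm : is_metric d) (Hprop : proper_space d) (u : nat -> X) :
  (forall e, 0 < e -> exists N, forall k l, (k >= N)%nat -> (l >= N)%nat -> d (u k) (u l) < e) ->
  exists z, forall e, 0 < e -> exists N, forall k, (k >= N)%nat -> d (u k) z < e.
Proof.
  intros Hc.
  destruct (Hc 1 ltac:(lra)) as [N0 HN0].
  destruct (fin_bound (fun k => d (u N0) (u k)) N0) as [M [HM HMb]].
  set (R0 := M + 1).
  set (c := u N0).
  assert (Hin : forall k, d c (u k) <= R0).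
  { intros k. unfold c, R0. destruct (le_lt_dec k N0) as [Hk|Hk].
    - specialize (HMb k Hk). simpl in HMb. lra.
    - specialize (HN0 N0 k ltac:(lia) ltac:(lia)). lra. }
  set (Fs := fun w => d c w <= R0).
  assert (Hcl : Defs.closed_set d Fs).
  { unfold Defs.closed_set, Defs.open_set. intros w Hw. unfold Fs in Hw. apply Rnot_le_lt in Hw.
    exists (d c w - R0). split; [lra|].
    intros y0 Hy. unfold Fs. pose proof (dtri d Hm c y0 w) as H. rewrite (dsym d Hm y0 w) in H. lra. }
  assert (Hbd : Defs.bounded_set d Fs).
  { exists (2 * R0). intros a b Ha Hb. unfold Fs in *.
    pose proof (dtri d Hm a c b) as H. rewrite (dsym d Hm a c) in H. lra. }
  apply NNPP. intros Hno.
  assert (Hfar : forall z, exists e, 0 < e /\ exists N, forall k, (k >= N)%nat -> 2 * e <= d z (u k)).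
  { intros z.
    assert (H1 : ~ forall e, 0 < e -> exists N, forall k, (k >= N)%nat -> d (u k) z < e)
      by (intro H; apply Hno; exists z; exact H).
    apply not_all_ex_not in H1. destruct H1 as [e0 H1].
    apply imply_to_and in H1. destruct H1 as [He0 H1].
    destruct (Hc (e0/2) ltac:(lra)) as [M1 HM1].
    assert (H2 : exists k, (k >= M1)%nat /\ e0 <= d (u k) z).
    { apply NNPP. intros H2. apply H1. exists M1. intros k Hk.
      apply Rnot_le_lt. intros H3. apply H2. exists k. auto. }
    destruct H2 as [k [Hk Hkz]].
    exists (e0/4). split; [lra|]. exists M1. intros l Hl.
    pose proof (dtri d Hm (u k) (u l) z) as H. specialize (HM1 k l Hk Hl).
    rewrite (dsym d Hm (u l) z) in H. lra. }
  set (I := {p : X * R | 0 < snd p /\ exists N, forall k, (k >= N)%nat -> 2 * snd p <= d (fst p) (u k)}).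
  set (U := fun (i : I) w => d (fst (proj1_sig i)) w < snd (proj1_sig i)).
  destruct (Hprop Fs Hcl Hbd I U) as [l Hl].
  - intros i w Hw. unfold U in *. exists (snd (proj1_sig i) - d (fst (proj1_sig i)) w). split; [lra|].
    intros y0 Hy. pose proof (dtri d Hm (fst (proj1_sig i)) w y0). lra.
  - intros w _. destruct (Hfar w) as [e [He HN]].
    exists (exist _ (w, e) (conj He HN)). unfold U. simpl. rewrite (dxx d Hm). exact He.
  - destruct (list_N d u I (fun i => fst (proj1_sig i)) (fun i => snd (proj1_sig i))
       (fun i => proj2 (proj2_sig i)) l) as [N HN].
    destruct (Hl (u (Nat.max N N0)) (Hin _)) as [i [Hil Hi]].
    specialize (HN i Hil (Nat.max N N0) ltac:(lia)).
    unfold U in Hi. pose proof (proj1 (proj2_sig i)). simpl in *. lra.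
Qed.

Definition Fstep {X} (sigma : X -> X -> R -> X) n (x y : X) (p : nat -> X) : nat -> X :=
  fun i => if Nat.eqb i 0 then x else if Nat.ltb i n then sigma (p (i-1)%nat) (p (i+1)%nat) (1/2) else y.
Definition it {X} (sigma : X -> X -> R -> X) n (x y : X) (k : nat) : nat -> X :=
  Nat.iter k (Fstep sigma n x y) (fun i => if Nat.ltb i n then x else y).

Definition thn n := 1 - 1 / (INR n * INR n).

Lemma th_facts n : (1 <= n)%nat -> 0 <= thn n < 1 /\ 1 <= INR n * INR n /\
  forall i, (i <= n)%nat -> wt n i - 1 <= thn n * wt n i.
Proof.
  intros Hn. assert (1 <= INR n) by (apply (le_INR 1); lia).
  set (W := INR n * INR n). assert (HW : 1 <= W) by (unfold W; nra).
  assert (1 / W <= 1). { apply Rmult_le_reg_r with W; [lra|]. unfold Rdiv; rewrite Rmult_assoc, Rinv_l by lra. lra. }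
  assert (0 < 1 / W) by (apply Rdiv_lt_0_compat; lra).
  unfold thn. fold W. split; [lra|split; [lra|]].
  intros i Hi. pose proof (wt_le n i Hi). fold W in H2.
  assert (wt n i / W <= 1). { apply Rmult_le_reg_r with W; [lra|]. unfold Rdiv; rewrite Rmult_assoc, Rinv_l by lra. lra. }
  replace ((1 - 1 / W) * wt n i) with (wt n i - wt n i / W) by (field; lra). lra.
Qed.

Lemma exist_sub {X} (d : X -> X -> R) sigma (Hm : is_metric d) (Hprop : proper_space d)
  (Hs : conical_bicombing d sigma) n (Hn : (1 <= n)%nat) x y :
  exists p, subdivision_points sigma n x y p.
Proof.
  destruct (th_facts n Hn) as [Hth [HW Hthw]].
  set (th := thn n) in *. set (W := INR n * INR n) in *.
  set (C := d x y).
  assert (HC : 0 <= C) by apply (dnn d Hm).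
  assert (It0 : forall k, it sigma n x y k 0%nat = x).
  { intros [|k]; simpl; unfold Fstep; simpl; auto.
    destruct (Nat.ltb_spec 0 n); auto; lia. }
  assert (Itn : forall k, it sigma n x y k n = y).
  { intros [|k]; simpl; unfold Fstep.
    - destruct (Nat.ltb_spec n n); auto; lia.
    - destruct (Nat.eqb_spec n 0); [lia|]. destruct (Nat.ltb_spec n n); auto; lia. }
  assert (ItS : forall k i, (1 <= i)%nat -> (i <= n - 1)%nat ->
     it sigma n x y (S k) i = sigma (it sigma n x y k (i-1)%nat) (it sigma n x y k (i+1)%nat) (1/2)).
  { intros k i H1 H2. simpl. unfold Fstep at 1. destruct (Nat.eqb_spec i 0); [lia|].
    destruct (Nat.ltb_spec i n); [reflexivity|lia]. }
  assert (A : forall k i, (i <= n)%nat ->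
    d (it sigma n x y k i) (it sigma n x y (S k) i) <= C * th ^ k * wt n i).
  { induction k as [|k IH]; intros i Hi.
    - destruct (Nat.eq_dec i 0) as [->|Ni]; [rewrite !It0, (dxx d Hm); unfold wt; simpl; lra|].
      destruct (Nat.eq_dec i n) as [->|Nn]; [rewrite !Itn, (dxx d Hm); apply Rmult_le_pos; [simpl; lra|apply wt_nonneg; lia]|].
      rewrite ItS by lia. simpl. pose proof (wt_ge1 n i ltac:(lia) ltac:(lia)).
      destruct (Nat.ltb_spec i n); [|lia]. destruct (Nat.ltb_spec (i-1) n); [|lia].
      rewrite (sig_l d sigma Hs) by lra.
      destruct (Nat.ltb_spec (i+1) n).
      + rewrite (dxx d Hm). nra.
      + fold C. nra.
    - destruct (Nat.eq_dec i 0) as [->|Ni]; [rewrite !It0, (dxx d Hm); unfold wt; simpl; lra|].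
      destruct (Nat.eq_dec i n) as [->|Nn].
      { rewrite !Itn, (dxx d Hm). apply Rmult_le_pos; [apply Rmult_le_pos; [lra|apply pow_le; lra]|apply wt_nonneg; lia]. }
      rewrite (ItS (S k)) by lia. rewrite (ItS k) by lia.
      eapply Rle_trans; [apply (sigc d sigma Hs); lra|].
      pose proof (IH (i-1)%nat ltac:(lia)). pose proof (IH (i+1)%nat ltac:(lia)).
      pose proof (wt_rec n i ltac:(lia)) as Hrec. pose proof (Hthw i Hi).
      assert (Hp : 0 <= C * th ^ k) by (apply Rmult_le_pos; [lra| apply pow_le; lra]).
      assert (C * th ^ k * (wt n i - 1) <= C * th ^ k * (th * wt n i)) by (apply Rmult_le_compat_l; lra).
      replace (C * th ^ S k * wt n i) with (C * th ^ k * (th * wt n i)) by (simpl; ring).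
      assert (E : C * th ^ k * (wt n i - 1) = (1 - 1/2) * (C * th ^ k * wt n (i-1)) + 1/2 * (C * th ^ k * wt n (i+1)))
        by (replace (wt n i - 1) with ((wt n (i-1) + wt n (i+1))/2) by lra; field).
      lra. }
  assert (B : forall j k i, (i <= n)%nat ->
    d (it sigma n x y k i) (it sigma n x y (k + j) i) <= C * W * W * th ^ k * (1 - th ^ j)).
  { induction j as [|j IH]; intros k i Hi.
    - rewrite Nat.add_0_r, (dxx d Hm). simpl. lra.
    - eapply Rle_trans; [apply (dtri d Hm _ (it sigma n x y (k + j) i))|].
      replace (k + S j)%nat with (S (k + j)) by lia.
      pose proof (IH k i Hi). pose proof (A (k+j)%nat i Hi).
      pose proof (wt_le n i Hi). fold W in H1.
      assert (C * th ^ (k + j) * wt n i <= C * th ^ (k+j) * W) by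
        (apply Rmult_le_compat_l; [apply Rmult_le_pos; [lra|apply pow_le; lra]|lra]).
      assert (E : C * W * W * th ^ k * (1 - th ^ S j) = C * W * W * th ^ k * (1 - th ^ j) + C * th ^ (k+j) * W).
      { rewrite pow_add. simpl. unfold th, thn. fold W. field. lra. }
      lra. }
  assert (Cau : forall i, (i <= n)%nat -> forall e, 0 < e -> exists N, forall k l, (k >= N)%nat -> (l >= N)%nat ->
     d (it sigma n x y k i) (it sigma n x y l i) < e).
  { intros i Hi e He.
    assert (Hy : 0 < e / (C * W * W + 1)) by (apply Rdiv_lt_0_compat; [lra| nra]).
    destruct (pow_lt_1_zero th ltac:(rewrite Rabs_pos_eq; lra) _ Hy) as [N HN].
    assert (Hkj : forall k j, (k >= N)%nat -> d (it sigma n x y k i) (it sigma n x y (k + j) i) < e).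
    { intros k j Hk0. eapply Rle_lt_trans; [apply B; auto|].
      specialize (HN k Hk0). rewrite Rabs_pos_eq in HN by (apply pow_le; lra).
      assert (0 <= th ^ j <= 1) by (split; [apply pow_le; lra| rewrite <- (pow1 j); apply pow_incr; lra]).
      assert (0 <= th ^ k) by (apply pow_le; lra).
      assert (C * W * W * th ^ k * (1 - th ^ j) <= C * W * W * th ^ k) by
        (assert (0 <= C * W * W * th ^ k) by (apply Rmult_le_pos; [apply Rmult_le_pos; [apply Rmult_le_pos|]|]; lra); nra).
      assert (C * W * W * th ^ k <= C * W * W * (e / (C * W * W + 1))) by
        (apply Rmult_le_compat_l; [apply Rmult_le_pos; [apply Rmult_le_pos|]; lra| lra]).
      assert (C * W * W * (e / (C * W * W + 1)) < e).
      { assert (0 <= C * W * W) by (apply Rmult_le_pos; [apply Rmult_le_pos|]; lra).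
        assert (C * W * W * (e / (C * W * W + 1)) = e - e / (C * W * W + 1)) by (field; lra). lra. }
      lra. }
    exists N. intros k l Hk Hl. destruct (le_lt_dec k l) as [Hkl|Hkl].
    - replace l with (k + (l - k))%nat by lia. apply Hkj; auto.
    - rewrite (dsym d Hm). replace k with (l + (k - l))%nat by lia. apply Hkj; auto. }
  assert (Hq : forall i, exists z, (i <= n)%nat -> forall e, 0 < e -> exists N, forall k, (k >= N)%nat ->
     d (it sigma n x y k i) z < e).
  { intros i. destruct (le_lt_dec i n) as [Hi|Hi].
    - destruct (complete d Hm Hprop (fun k => it sigma n x y k i) (Cau i Hi)) as [z Hz].
      exists z. intros _. exact Hz.
    - exists x. intros; lia. }
  set (q := fun i => proj1_sig (constructive_indefinite_description _ (Hq i))).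
  assert (Hql : forall i, (i <= n)%nat -> forall e, 0 < e -> exists N, forall k, (k >= N)%nat ->
     d (it sigma n x y k i) (q i) < e).
  { intros i. unfold q. destruct (constructive_indefinite_description _ (Hq i)) as [z Hz]. exact Hz. }
  exists q. split; [|split].
  - apply (dsmall d Hm). intros e He. destruct (Hql 0%nat ltac:(lia) e He) as [N HN].
    specialize (HN N (le_n _)). rewrite It0 in HN. rewrite (dsym d Hm). exact HN.
  - apply (dsmall d Hm). intros e He. destruct (Hql n ltac:(lia) e He) as [N HN].
    specialize (HN N (le_n _)). rewrite Itn in HN. rewrite (dsym d Hm). exact HN.
  - intros i H1 H2. apply (dsmall d Hm). intros e He.
    destruct (Hql (i-1)%nat ltac:(lia) (e/2) ltac:(lra)) as [N1 HN1].
    destruct (Hql (i+1)%nat ltac:(lia) (e/2) ltac:(lra)) as [N2 HN2].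
    destruct (Hql i ltac:(lia) (e/2) ltac:(lra)) as [N3 HN3].
    set (K := Nat.max N1 (Nat.max N2 N3)).
    specialize (HN1 K ltac:(lia)). specialize (HN2 K ltac:(lia)). specialize (HN3 (S K) ltac:(lia)).
    eapply Rle_lt_trans; [apply (dtri d Hm _ (it sigma n x y (S K) i))|].
    rewrite (dsym d Hm (q i)). rewrite ItS by lia.
    pose proof (sigc d sigma Hs (it sigma n x y K (i - 1)) (it sigma n x y K (i + 1)) (q (i-1)%nat) (q (i+1)%nat) (1/2) ltac:(lra)).
    rewrite ItS in HN3 by lia. lra.
Qed.

Theorem lemma5p2 (X : Type) (d : X -> X -> R) (sigma : X -> X -> R -> X)
  (Hmet : is_metric d) (Hprop : proper_space d)
  (Hsig : conical_bicombing d sigma) (n : nat) (Hn : (1 <= n)%nat) :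
  (forall x y : X,
     exists p : nat -> X, subdivision_points sigma n x y p /\
       forall q : nat -> X, subdivision_points sigma n x y q ->
         forall i, (i <= n)%nat -> q i = p i) /\
  (forall P : X -> X -> nat -> X,
     (forall x y, subdivision_points sigma n x y (P x y)) ->
     (exists s, is_sigma_n sigma n P s) /\
     (forall s, is_sigma_n sigma n P s -> conical_bicombing d s)).
Proof.
  split.
  - intros x y. destruct (exist_sub d sigma Hmet Hprop Hsig n Hn x y) as [p Hp].
    exists p. split; auto. intros q Hq i Hi.
    apply (d0 d Hmet). pose proof (compare d sigma Hmet Hsig n Hn x y x y q p Hq Hp i Hi) as C.
    rewrite !(dxx d Hmet) in C. pose proof (dnn d Hmet (q i) (p i)). lra.
  - intros P HP. split.
    + apply (sigma_n_exists d sigma Hmet Hsig n Hn P).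
    + apply (sigma_n_conical d sigma Hmet Hsig n Hn P HP).
Qed.
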